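(* Let $n\ge 2$. Then $\mathrm{P}=\Gamma^{(0)}=\Gamma^{(1)}$, where $$\Gamma^{(j)}=\{T\in\mathrm{C}^\times:\ T\,\mathrm{C}^{(j)}\,T^{-1}\subseteq\mathrm{C}^{(j)}\},\quad j=0,1.$$ Explicitly, $\mathrm{P}=\mathrm{C}^{\times(0)}\cup\mathrm{C}^{\times(1)}$ if $n$ is even, and $\mathrm{P}=\mathrm{Z}^\times\,\mathrm{C}^{\times(0)}$ if $n$ is odd.
   Context: Let $\mathrm{C}$ be either the real Clifford algebra $C\ell_{p,q}$ with $p+q=n$, or the complex Clifford algebra $C\ell(\mathbb{C}^n)$. It has identity $e$ and generators $e_1,\dots,e_n$ satisfying $e_ae_b+e_be_a=2\eta_{ab}e$. In the real case $\eta=\mathrm{diag}(1,\dots,1,-1,\dots,-1)$ with $p$ entries $+1$ and $q$ entries $-1$. In the complex case $\eta=I_n$. $\mathrm{C}^k$ is the grade-$k$ subspace, spanned by the products $e_{a_1}\cdots e_{a_k}$ with $a_1<\dots<a_k$. The even subspace is $\mathrm{C}^{(0)}=\bigoplus_{k\text{ even}}\mathrm{C}^k$ and the odd subspace is $\mathrm{C}^{(1)}=\bigoplus_{k\text{ odd}}\mathrm{C}^k$. For $S\subseteq\mathrm{C}$, $S^\times$ is the set of elements of $S$ invertible in $\mathrm{C}$, and $\mathrm{C}^{\times(j)}:=(\mathrm{C}^{(j)})^\times$. $\mathrm{Z}$ is the center of $\mathrm{C}$: $\mathrm{Z}=\mathrm{C}^0$ for $n$ even and $\mathrm{Z}=\mathrm{C}^0\oplus\mathrm{C}^n$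 for $n$ odd. Define $$\mathrm{P}:=\mathrm{Z}^\times(\mathrm{C}^{\times(0)}\cup\mathrm{C}^{\times(1)})=\{WT:\ W\in\mathrm{Z}^\times,\ T\in\mathrm{C}^{\times(0)}\cup\mathrm{C}^{\times(1)}\}.$$ *)

(* Defs.v *)
From HB Require Import structures.
From mathcomp Require Import all_boot all_order all_algebra.
From mathcomp Require Import reals.
From mathcomp Require Import complex.
Set Implicit Arguments. Unset Strict Implicit. Unset Printing Implicit Defensive.
Import Order.TTheory GRing.Theory Num.Theory.
Local Open Scope ring_scope.

Section Clifford.
Variables (K : fieldType) (n : nat) (eta : 'I_n -> K).

(* elements of the Clifford algebra: coordinates on the blades e_A *)
Definition clif := {ffun {set 'I_n} -> K}.

Definition symdiff (A B : {set 'I_n}) : {set 'I_n} := (A :\: B) :|: (B :\: A).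

(* e_A e_B = (-1)^{#{(a,b) in A x B | a > b}} (prod_{i in A cap B} eta_i) e_{A symdiff B},
   where e_A = e_{a_1} ... e_{a_k} with a_1 < ... < a_k. *)
Definition blade_coef (A B : {set 'I_n}) : K :=
  (-1) ^+ #|[set ab : 'I_n * 'I_n | [&& ab.1 \in A, ab.2 \in B & (ab.2 < ab.1)%N]]|
  * \prod_(i in A :&: B) eta i.

Definition cmul (x y : clif) : clif :=
  [ffun C => \sum_(A : {set 'I_n}) \sum_(B : {set 'I_n} | symdiff A B == C)
               x A * y B * blade_coef A B].

Definition cone : clif := [ffun A => if A == set0 then 1 else 0].

Definition cgen (i : 'I_n) : clif := [ffun A => if A == [set i] then 1 else 0].

Definition grade (k : nat) (x : clif) : Prop := forall A : {set 'I_n}, #|A| != k -> x A = 0.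

Definition parity (j : bool) (x : clif) : Prop := forall A : {set 'I_n}, odd #|A| != j -> x A = 0.

Definition cinverse (x y : clif) : Prop := cmul x y = cone /\ cmul y x = cone.
Definition cunit (x : clif) : Prop := exists y, cinverse x y.

Definition center (x : clif) : Prop := forall y, cmul x y = cmul y x.

Definition Pset (x : clif) : Prop :=
  exists W T, [/\ center W, cunit W, cunit T, parity false T \/ parity true T
                & x = cmul W T].

Definition Gamma (j : bool) (T : clif) : Prop :=
  cunit T /\ forall U, cinverse T U ->
    forall X, parity j X -> parity j (cmul (cmul T X) U).

Definition theorem4_concl : Prop :=
  (forall x, Pset x <-> Gamma false x) /\
  (forall x, Pset x <-> Gamma true x) /\
  (~~ odd n -> forall x, Pset x <->
       ((cunit x /\ parity false x) \/ (cunit x /\ parity true x))) /\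
  (odd n -> forall x, Pset x <->
       exists W T, [/\ center W, cunit W, cunit T, parity false T & x = cmul W T]).

End Clifford.

(* real signature (p,q) on n = p + q generators: eta_a = 1 for a < p, -1 otherwise
   (q is determined as n - p; the theorem assumes p + q = n) *)
Definition sig_eta (R : nzRingType) (n p : nat) (a : 'I_n) : R :=
  if (a < p)%N then 1 else -1.
Arguments sig_eta : clear implicits.

(* Main.v *)
Require Import Defs.
From mathcomp Require Import all_boot all_order all_algebra.
From mathcomp Require Import reals complex.
From mathcomp Require Import zify ring.
Set Implicit Arguments. Unset Strict Implicit. Unset Printing Implicit Defensive.
Import Order.TTheory GRing.Theory Num.Theory.
Local Open Scope ring_scope.



Section Sets.
Variable T : finType.
Implicit Types A B C : {set T}.
Definition sd A B := (A :\: B) :|: (B :\: A).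

Lemma in_sd A B x : (x \in sd A B) = (x \in A) (+) (x \in B).
Proof. by rewrite !inE; case: (x \in A); case: (x \in B). Qed.

Lemma sdC A B : sd A B = sd B A.
Proof. by apply/setP=> x; rewrite !in_sd addbC. Qed.
Lemma sdA A B C : sd A (sd B C) = sd (sd A B) C.
Proof. by apply/setP=> x; rewrite !in_sd addbA. Qed.
Lemma sd0 A : sd A set0 = A.
Proof. by apply/setP=> x; rewrite !in_sd inE addbF. Qed.
Lemma sd0l A : sd set0 A = A.
Proof. by rewrite sdC sd0. Qed.
Lemma sdv A : sd A A = set0.
Proof. by apply/setP=> x; rewrite !in_sd inE addbb. Qed.
Lemma sdK A B : sd A (sd A B) = B.
Proof. by rewrite sdA sdv sd0l. Qed.
Lemma sdKr A B : sd (sd B A) A = B.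
Proof. by rewrite -sdA sdv sd0. Qed.
Lemma sd_eq0 A B : (sd A B == set0) = (A == B).
Proof.
apply/eqP/eqP=> [h|->]; last exact: sdv.
by rewrite -(sdKr B A) h sd0l.
Qed.
Lemma sd_eq A B C : (sd A B == C) = (B == sd A C).
Proof.
by apply/eqP/eqP=> [<-|->]; rewrite sdK.
Qed.

Lemma odd_card_sd A B : odd #|sd A B| = odd #|A| (+) odd #|B|.
Proof.
have hd : [disjoint A :\: B & B :\: A].
  by apply/pred0P=> x; rewrite /= !inE; case: (x \in A); case: (x \in B).
rewrite /sd (cardsU (A :\: B)) (_ : (A :\: B) :&: (B :\: A) = set0); last first.
  by apply/setP=> x; rewrite !inE; case: (x \in A); case: (x \in B).
rewrite cards0 subn0 -(cardsID B A) -(cardsID A B) setIC !oddD.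
by case: (odd #|B :&: A|); case: (odd #|A :\: B|); case: (odd #|B :\: A|).
Qed.

Lemma odd_card_xor (X Y Z : {set T}) :
  (forall x, (x \in Z) = (x \in X) (+) (x \in Y)) -> odd #|Z| = odd #|X| (+) odd #|Y|.
Proof.
move=> h; have -> : Z = sd X Y by apply/setP=> x; rewrite h in_sd.
exact: odd_card_sd.
Qed.

End Sets.



Section Coef.
Variables (K : fieldType) (n : nat) (eta : 'I_n -> K).
Implicit Types A B C D : {set 'I_n}.

Lemma symdiffE A B : symdiff A B = sd A B. Proof. by []. Qed.

Definition inv A B := #|[set ab : 'I_n * 'I_n | [&& ab.1 \in A, ab.2 \in B & (ab.2 < ab.1)%N]]|.
Definition etp A := \prod_(i in A) eta i.

Lemma coefE A B : blade_coef eta A B = (-1) ^+ inv A B * etp (A :&: B).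
Proof. by []. Qed.

Lemma sgn_odd (m k : nat) : odd m = odd k -> (-1) ^+ m = (-1) ^+ k :> K.
Proof. by move=> h; rewrite -signr_odd h signr_odd. Qed.

Lemma oddinvDl A B C : odd (inv (sd A B) C) = odd (inv A C) (+) odd (inv B C).
Proof.
apply: odd_card_xor => ab; rewrite !inE.
by case: (ab.1 \in A); case: (ab.1 \in B); case: (ab.2 \in C); case: (ab.2 < ab.1)%N.
Qed.

Lemma oddinvDr A B C : odd (inv A (sd B C)) = odd (inv A B) (+) odd (inv A C).
Proof.
apply: odd_card_xor => ab; rewrite !inE.
by case: (ab.1 \in A); case: (ab.2 \in B); case: (ab.2 \in C); case: (ab.2 < ab.1)%N.
Qed.

Lemma etp_mk A : etp A = \prod_i (if i \in A then eta i else 1).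
Proof. by rewrite /etp big_mkcond. Qed.

Lemma cocycle A B C :
  blade_coef eta A B * blade_coef eta (sd A B) C =
  blade_coef eta B C * blade_coef eta A (sd B C).
Proof.
rewrite !coefE mulrACA [RHS]mulrACA -!exprD; congr (_ * _).
  apply: sgn_odd; rewrite !oddD oddinvDl oddinvDr.
  by case: (odd (inv A B)); case: (odd (inv A C)); case: (odd (inv B C)).
rewrite !etp_mk -!big_split /=; apply: eq_bigr => i _.
rewrite !inE.
by case: (i \in A); case: (i \in B); case: (i \in C); rewrite /= ?mulr1 ?mul1r.
Qed.

Lemma coef0l B : blade_coef eta set0 B = 1.
Proof.
rewrite coefE set0I /etp big_set0 mulr1 /inv.
rewrite (_ : [set _ | _] = set0) ?cards0 ?expr0 //.
by apply/setP=> ab; rewrite !inE.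
Qed.

Lemma coef0r A : blade_coef eta A set0 = 1.
Proof.
rewrite coefE setI0 /etp big_set0 mulr1 /inv.
rewrite (_ : [set _ | _] = set0) ?cards0 ?expr0 //.
by apply/setP=> ab; rewrite !inE andbF.
Qed.

End Coef.



Section Mul.
Variables (K : fieldType) (n : nat) (eta : 'I_n -> K).
Implicit Types A B C D : {set 'I_n}.
Implicit Types x y z : clif K n.
Local Notation "x ** y" := (cmul eta x y) (at level 40, left associativity).
Local Notation c := (blade_coef eta).

Definition cadd x y : clif K n := [ffun A => x A + y A].
Definition cscale (k : K) x : clif K n := [ffun A => k * x A].

Lemma cmulE x y C : (x ** y) C = \sum_A x A * y (sd A C) * c A (sd A C).
Proof.
rewrite ffunE; apply: eq_bigr => A _; rewrite (big_pred1 (sd A C)) // => B /=.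
by rewrite symdiffE sd_eq.
Qed.

Lemma cmulA x y z : x ** y ** z = x ** (y ** z).
Proof.
apply/ffunP=> D; rewrite !cmulE.
under eq_bigr do rewrite cmulE !big_distrl /=.
rewrite exchange_big /=; apply: eq_bigr => A _.
rewrite cmulE big_distrr big_distrl /=.
rewrite (reindex_inj (can_inj (sdK A))) /=; apply: eq_bigr => B _.
rewrite sdK.
have e1 : sd (sd A B) D = sd B (sd A D) by rewrite !sdA (sdC B A).
rewrite e1; set C := sd B (sd A D).
have e2 : sd A D = sd B C by rewrite /C sdK.
have h := cocycle eta A B C.
rewrite e2.
transitivity (x A * y B * z C * (c A B * c (sd A B) C)); first by ring.
rewrite h; ring.
Qed.

End Mul.



Section Mul2.
Variables (K : fieldType) (n : nat) (eta : 'I_n -> K).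
Implicit Types A B C D : {set 'I_n}.
Implicit Types x y z : clif K n.
Local Notation "x ** y" := (cmul eta x y) (at level 40, left associativity).
Local Notation c := (blade_coef eta).
Local Notation cone := (cone K n).

Definition bas A : clif K n := [ffun C => if C == A then 1 else 0].

Lemma cone_bas : cone = bas set0. Proof. by []. Qed.
Lemma cgen_bas k : cgen K k = bas [set k]. Proof. by []. Qed.

Lemma bas_mull A x : bas A ** x = [ffun C => x (sd A C) * c A (sd A C)].
Proof.
apply/ffunP=> C; rewrite cmulE (bigD1 A) //= big1 ?addr0; last first.
  by move=> B hB; rewrite ffunE (negbTE hB) !mul0r.
by rewrite !ffunE eqxx mul1r.
Qed.

Lemma sdKC A C : sd (sd C A) C = A.
Proof. by rewrite sdC sdK. Qed.

Lemma bas_mulr A x : x ** bas A = [ffun C => x (sd C A) * c (sd C A) A].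
Proof.
apply/ffunP=> C; rewrite cmulE (bigD1 (sd C A)) //= big1 ?addr0; last first.
  move=> B hB; rewrite ffunE; case: eqP => [e|_]; last by rewrite mulr0 mul0r.
  by case/eqP: hB; rewrite -e sdC sdKr.
by rewrite !ffunE sdKC eqxx mulr1.
Qed.

Lemma cmul1l x : cone ** x = x.
Proof.
rewrite cone_bas bas_mull; apply/ffunP=> C; rewrite ffunE sd0l.
by rewrite coef0l mulr1.
Qed.

Lemma cmul1r x : x ** cone = x.
Proof.
rewrite cone_bas bas_mulr; apply/ffunP=> C; rewrite ffunE sd0.
by rewrite coef0r mulr1.
Qed.

Lemma bas_mul A B : bas A ** bas B = cscale (c A B) (bas (sd A B)).
Proof.
rewrite bas_mull; apply/ffunP=> C; rewrite !ffunE sd_eq.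
case: eqP => [->|_]; last by rewrite mul0r mulr0.
by rewrite sdK mul1r mulr1.
Qed.

Lemma cmulDl x y z : cadd x y ** z = cadd (x ** z) (y ** z).
Proof.
apply/ffunP=> C; rewrite cmulE [in RHS]ffunE !cmulE -big_split /=; apply: eq_bigr => A _.
by rewrite ffunE !mulrDl.
Qed.

Lemma cmulDr x y z : x ** cadd y z = cadd (x ** y) (x ** z).
Proof.
apply/ffunP=> C; rewrite cmulE [in RHS]ffunE !cmulE -big_split /=; apply: eq_bigr => A _.
by rewrite ffunE mulrDr !mulrDl.
Qed.

Lemma cmulZl k x y : cscale k x ** y = cscale k (x ** y).
Proof.
apply/ffunP=> C; rewrite cmulE [in RHS]ffunE !cmulE big_distrr /=; apply: eq_bigr => A _.
by rewrite ffunE !mulrA.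
Qed.

Lemma cmulZr k x y : x ** cscale k y = cscale k (x ** y).
Proof.
apply/ffunP=> C; rewrite cmulE [in RHS]ffunE !cmulE big_distrr /=; apply: eq_bigr => A _.
by rewrite ffunE; ring.
Qed.

Lemma cscaleA k l x : cscale k (cscale l x) = cscale (k * l) x.
Proof. by apply/ffunP=> C; rewrite !ffunE mulrA. Qed.
Lemma cscale1 x : cscale 1 x = x.
Proof. by apply/ffunP=> C; rewrite !ffunE mul1r. Qed.

End Mul2.



Section Alpha.
Variables (K : fieldType) (n : nat) (eta : 'I_n -> K).
Implicit Types A B C D : {set 'I_n}.
Implicit Types x y z : clif K n.
Local Notation "x ** y" := (cmul eta x y) (at level 40, left associativity).
Local Notation c := (blade_coef eta).
Local Notation cone := (cone K n).

Definition alpha x : clif K n := [ffun A : {set 'I_n} => (-1) ^+ #|A| * x A].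

Lemma sgn_sq (m : nat) : (-1) ^+ m * (-1) ^+ m = 1 :> K.
Proof. by rewrite -exprD (@sgn_odd K _ 0) // addnn odd_double. Qed.

Lemma alpha_mul x y : alpha (x ** y) = alpha x ** alpha y.
Proof.
apply/ffunP=> C; rewrite [LHS]ffunE !cmulE big_distrr /=; apply: eq_bigr => A _.
rewrite !ffunE.
have h : (-1) ^+ #|C| = (-1) ^+ #|A| * (-1) ^+ #|sd A C| :> K.
  rewrite -exprD; apply: sgn_odd; rewrite oddD odd_card_sd.
  by case: (odd #|A|); case: (odd #|C|).
rewrite h; ring.
Qed.

Lemma alpha_cone : alpha cone = cone.
Proof.
apply/ffunP=> C; rewrite !ffunE; case: eqP => [->|_]; last by rewrite mulr0.
by rewrite cards0 expr0 mulr1.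
Qed.

Lemma alphaK x : alpha (alpha x) = x.
Proof. by apply/ffunP=> C; rewrite !ffunE mulrA sgn_sq mul1r. Qed.

Lemma alpha_add x y : alpha (cadd x y) = cadd (alpha x) (alpha y).
Proof. by apply/ffunP=> C; rewrite !ffunE mulrDr. Qed.

Lemma alpha_scale k x : alpha (cscale k x) = cscale k (alpha x).
Proof. by apply/ffunP=> C; rewrite !ffunE mulrCA. Qed.

Lemma alpha_inv T U : cinverse eta T U -> cinverse eta (alpha T) (alpha U).
Proof.
by case=> h1 h2; split; rewrite -alpha_mul ?h1 ?h2 alpha_cone.
Qed.

Lemma parity_alpha (two : (2 : K) != 0) j x :
  parity j x <-> alpha x = cscale ((-1) ^+ j) x.
Proof.
split=> [h|h].
  apply/ffunP=> A; rewrite !ffunE; case: (boolP (odd #|A| == j)) => [/eqP e|ne].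
    by rewrite -signr_odd e.
  by rewrite h // !mulr0.
move=> A ne; have := congr1 (fun f : clif K n => f A) h; rewrite !ffunE -signr_odd.
have -> : odd #|A| = ~~ j by move: ne; case: (odd #|A|); case: (j).
clear h ne; case: j => e; rewrite /= ?expr0 ?expr1 ?mul1r ?mulN1r in e;
  have h2 : x A * 2 = x A - - x A by ring.
  rewrite -e subrr in h2.
  by move/eqP: h2; rewrite mulf_eq0 (negbTE two) orbF => /eqP.
rewrite e subrr in h2.
by move/eqP: h2; rewrite mulf_eq0 (negbTE two) orbF => /eqP.
Qed.

Lemma card_pairs (P : pred ('I_n * 'I_n)) :
  #|[set ab | P ab]| = (\sum_a \sum_b P (a, b))%N.
Proof.
rewrite -sum1_card big_mkcond /= pair_bigA /=; apply: eq_bigr => [[a b]] _.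
by rewrite inE.
Qed.

Lemma inv_sum A B : (inv A B + inv B A + #|A :&: B| = #|A| * #|B|)%N.
Proof.
have hd : #|A :&: B| = #|[set ab : 'I_n * 'I_n | [&& ab.1 \in A, ab.2 \in B & ab.1 == ab.2]]|.
  rewrite card_pairs -sum1_card big_mkcond /=; apply: eq_bigr => a _.
  rewrite (bigD1 a) //= big1 ?addn0; last first.
    by move=> b hb; rewrite eq_sym (negbTE hb) !andbF.
  by rewrite inE eqxx andbT.
have hi : inv B A = (\sum_a \sum_b [&& b \in B, a \in A & (a < b)%N])%N.
  by rewrite /inv card_pairs exchange_big.
have hx : #|setX A B| = #|[set ab : 'I_n * 'I_n | (ab.1 \in A) && (ab.2 \in B)]|.
  by congr (#|_|); apply/setP=> ab; rewrite !inE.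
rewrite hd hi -cardsX hx /inv !card_pairs -!big_split /=; apply: eq_bigr => a _.
rewrite -!big_split /=; apply: eq_bigr => b _.
rewrite -val_eqE /=.
by case: (a \in A); case: (b \in B); case: (ltngtP a b).
Qed.

Lemma cswap A B : c A B = (-1) ^+ (#|A| * #|B| + #|A :&: B|) * c B A.
Proof.
rewrite !coefE (setIC B A) mulrA -exprD; congr (_ * _); apply: sgn_odd.
rewrite -inv_sum.
have -> : (inv A B + inv B A + #|A :&: B| + #|A :&: B| + inv B A =
          inv A B + (inv B A + #|A :&: B|).*2)%N by rewrite -addnn; lia.
by rewrite oddD odd_double addbF.
Qed.

Lemma coef_neq0 (etaNZ : forall i, eta i != 0) A B : c A B != 0.
Proof.
by rewrite coefE mulf_neq0 ?signr_eq0 //; apply/prodf_neq0 => i _.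
Qed.

End Alpha.



Section Struct.
Variables (K : fieldType) (n : nat) (eta : 'I_n -> K).
Hypothesis etaNZ : forall i, eta i != 0.
Hypothesis two : (2 : K) != 0.
Implicit Types A B C D : {set 'I_n}.
Implicit Types x y z S R : clif K n.
Local Notation "x ** y" := (cmul eta x y) (at level 40, left associativity).
Local Notation c := (blade_coef eta).
Local Notation cone := (cone K n).
Local Notation eN := (bas K (setT : {set 'I_n})).

Lemma card1I k B : #|[set k] :&: B| = (k \in B).
Proof.
case: (boolP (k \in B)) => h.
  rewrite (_ : _ :&: _ = [set k]) ?cards1 //.
  by apply/setP=> i; rewrite !inE; case: eqP => // ->.
rewrite (_ : _ :&: _ = set0) ?cards0 //.
by apply/setP=> i; rewrite !inE; case: eqP => // ->; rewrite (negbTE h).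
Qed.

Lemma cardT : #|(setT : {set 'I_n})| = n.
Proof. by rewrite cardsT card_ord. Qed.

Lemma gen_coord k S R : cgen K k ** S = R ** cgen K k ->
  forall B, S B * (-1) ^+ (#|B| + (k \in B)) = R B.
Proof.
rewrite cgen_bas bas_mull bas_mulr => h B.
have := congr1 (fun f : clif K n => f (sd [set k] B)) h; rewrite !ffunE sdK.
rewrite (sdC (sd _ _)) sdK cswap cards1 mul1n card1I mulrA.
by apply: mulIf; apply: coef_neq0.
Qed.

Lemma sgnS (m : nat) : (-1) ^+ m.+1 = - (-1) ^+ m :> K.
Proof. by rewrite exprS mulN1r. Qed.

Lemma neg_self (a : K) : - a = a -> a = 0.
Proof.
move=> e; have h2 : a * 2 = a - - a by ring.
rewrite e subrr in h2.
by move/eqP: h2; rewrite mulf_eq0 (negbTE two) orbF => /eqP.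
Qed.

Lemma gen_comm S R : (forall k, cgen K k ** S = R ** cgen K k) ->
  forall B, B != set0 -> B != setT -> S B = 0.
Proof.
move=> h B h0 hT.
have [i hi] : exists i, i \in B by case/set0Pn: h0 => i; exists i.
have [k hk] : exists k, k \notin B.
  apply/existsP; move: hT; apply: contraR; rewrite negb_exists => /forallP H.
  by apply/eqP/setP=> j; rewrite inE; move: (H j); rewrite negbK.
have e1 := gen_coord (h i) B; have e2 := gen_coord (h k) B.
rewrite hi addn1 sgnS mulrN in e1; rewrite (negbTE hk) addn0 in e2.
rewrite -e2 in e1.
have := neg_self e1; move/eqP; rewrite mulf_eq0 signr_eq0 orbF => /eqP //.
Qed.

Lemma gen_top S (n0 : (0 < n)%N) : (forall k, cgen K k ** S = S ** cgen K k) ->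
  ~~ odd n -> S setT = 0.
Proof.
move=> h hn; have := gen_coord (h (Ordinal n0)) setT.
rewrite inE cardT addn1 sgnS mulrN.
rewrite (@sgn_odd K n 0) ?(negbTE hn) // expr0 mulr1; exact: neg_self.
Qed.

Lemma setT_neq0 (n0 : (0 < n)%N) : (setT : {set 'I_n}) != set0.
Proof. by apply/set0Pn; exists (Ordinal n0); rewrite inE. Qed.

Lemma decomp S (n0 : (0 < n)%N) : (forall B, B != set0 -> B != setT -> S B = 0) ->
  S = cadd (cscale (S set0) cone) (cscale (S setT) eN).
Proof.
move=> h; apply/ffunP=> C; rewrite !ffunE.
case: (eqVneq C set0) => [->|h0].
  by rewrite ?eqxx eq_sym (negbTE (setT_neq0 n0)) mulr1 mulr0 addr0.
case: (eqVneq C setT) => [->|hT].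
  by rewrite ?eqxx ?(negbTE (setT_neq0 n0)) mulr1 mulr0 add0r.
by rewrite !mulr0 addr0 h.
Qed.

Lemma eN_central x : odd n -> eN ** x = x ** eN.
Proof.
move=> hn; rewrite bas_mull bas_mulr; apply/ffunP=> C; rewrite !ffunE (sdC C).
rewrite cswap setTI cardT -mulSnr (@sgn_odd K _ 0) ?expr0 ?mul1r //.
by rewrite oddM /= hn.
Qed.

Lemma eN_even x : ~~ odd n -> eN ** x = alpha x ** eN.
Proof.
move=> hn; rewrite bas_mull bas_mulr; apply/ffunP=> C; rewrite !ffunE (sdC C).
rewrite cswap setTI cardT -mulSnr mulrA [_ * x _]mulrC; congr (_ * _ * _).
by apply: sgn_odd; rewrite oddM /= (negbTE hn).
Qed.

Lemma alpha_eN : alpha eN = cscale ((-1) ^+ n) eN.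
Proof.
apply/ffunP=> C; rewrite !ffunE; case: eqP => [->|_]; last by rewrite !mulr0.
by rewrite cardT.
Qed.

Lemma eN_sq : eN ** eN = cscale (c setT setT) cone.
Proof. by rewrite bas_mul sdv. Qed.

Lemma eN0 (n0 : (0 < n)%N) : eN set0 = 0.
Proof. by rewrite ffunE eq_sym (negbTE (setT_neq0 n0)). Qed.

Lemma cone0 : cone set0 = 1.
Proof. by rewrite ffunE eqxx. Qed.

Lemma coneT (n0 : (0 < n)%N) : cone setT = 0.
Proof. by rewrite ffunE (negbTE (setT_neq0 n0)). Qed.

Lemma eNT : eN setT = 1.
Proof. by rewrite ffunE eqxx. Qed.

Lemma comb_central a b : odd n -> center eta (cadd (cscale a cone) (cscale b eN)).
Proof.
move=> hn y; rewrite cmulDl cmulDr !cmulZl !cmulZr cmul1l cmul1r eN_central //.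
Qed.

End Struct.



Section Inv.
Variables (K : fieldType) (n : nat) (eta : 'I_n -> K).
Hypothesis etaNZ : forall i, eta i != 0.
Hypothesis two : (2 : K) != 0.
Implicit Types A B C D : {set 'I_n}.
Implicit Types x y z S R T U W X : clif K n.
Local Notation "x ** y" := (cmul eta x y) (at level 40, left associativity).
Local Notation c := (blade_coef eta).
Local Notation cone := (cone K n).
Local Notation eN := (bas K (setT : {set 'I_n})).

Lemma inv_uniq T U V : cinverse eta T U -> cinverse eta T V -> U = V.
Proof.
case=> h1 h2 [h3 h4].
by rewrite -(cmul1r eta U) -h3 -cmulA h2 cmul1l.
Qed.

Lemma inv_mul a a' b b' : cinverse eta a a' -> cinverse eta b b' ->
  cinverse eta (a ** b) (b' ** a').
Proof.
case=> h1 h2 [h3 h4]; split.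
  by rewrite cmulA -(cmulA _ b) h3 cmul1l h1.
by rewrite cmulA -(cmulA _ a') h2 cmul1l h4.
Qed.

Lemma inv_sym T U : cinverse eta T U -> cinverse eta U T.
Proof. by case. Qed.

Lemma inv_cone : cinverse eta cone cone.
Proof. by split; rewrite cmul1l. Qed.

Definition ah (j : bool) x := alpha x = cscale ((-1) ^+ j) x.

Lemma ah_mul (i j : bool) x y : ah i x -> ah j y -> ah (i (+) j) (x ** y).
Proof.
rewrite /ah => h1 h2; rewrite alpha_mul h1 h2 cmulZl cmulZr cscaleA signr_addb.
by rewrite mulrC.
Qed.

Lemma cscale_inv k T U : k * k = 1 -> cinverse eta T U ->
  cinverse eta (cscale k T) (cscale k U).
Proof.
move=> hk [h1 h2]; split; rewrite cmulZl cmulZr cscaleA hk cscale1 //.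
Qed.

Lemma ah_inv (j : bool) T U : cinverse eta T U -> ah j T -> ah j U.
Proof.
move=> hTU hT; rewrite /ah.
apply: (inv_uniq (alpha_inv hTU)); rewrite hT.
by apply: cscale_inv => //; apply: sgn_sq.
Qed.

Lemma parity_ah (j : bool) x : parity j x <-> ah j x.
Proof. exact: parity_alpha. Qed.

Lemma cgen_ah k : ah true (cgen K k).
Proof.
apply/ffunP=> C; rewrite !ffunE; case: eqP => [->|_]; last by rewrite !mulr0.
by rewrite cards1.
Qed.

Lemma cgen_sq k : cgen K k ** cgen K k = cscale (eta k) cone.
Proof.
rewrite !cgen_bas bas_mul sdv coefE setIid /etp big_set1.
rewrite (_ : inv _ _ = 0%N) ?expr0 ?mul1r //.
apply/eqP; rewrite cards_eq0; apply/eqP/setP=> ab; rewrite !inE.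
by case: ab => a b /=; case: eqP => // ->; case: eqP => // ->; rewrite ltnn.
Qed.

Definition comb a b := cadd (cscale a cone) (cscale b eN).

Lemma comb_mul a b a' b' :
  comb a b ** comb a' b' = comb (a * a' + b * b' * c setT setT) (a * b' + b * a').
Proof.
rewrite /comb !cmulDl !cmulDr !cmulZl !cmulZr !cmul1l !cmul1r eN_sq.
apply/ffunP=> C; rewrite !ffunE; ring.
Qed.

Lemma alpha_comb a b : alpha (comb a b) = comb a ((-1) ^+ n * b).
Proof.
rewrite /comb alpha_add !alpha_scale alpha_cone alpha_eN cscaleA.
by rewrite (mulrC b).
Qed.

Lemma comb0 a b (n0 : (0 < n)%N) : comb a b set0 = a.
Proof. by rewrite !ffunE ?eqxx eq_sym (negbTE (setT_neq0 n0)) mulr1 mulr0 addr0. Qed.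

Lemma combT a b (n0 : (0 < n)%N) : comb a b setT = b.
Proof. by rewrite !ffunE ?eqxx (negbTE (setT_neq0 n0)) mulr1 mulr0 add0r. Qed.

Lemma cscale_cone k : cscale k cone = comb k 0.
Proof. by apply/ffunP=> C; rewrite !ffunE mul0r addr0. Qed.

End Inv.



Section Cases.
Variables (K : fieldType) (n : nat) (eta : 'I_n -> K).
Hypothesis etaNZ : forall i, eta i != 0.
Hypothesis two : (2 : K) != 0.
Hypothesis n0 : (0 < n)%N.
Implicit Types A B C D : {set 'I_n}.
Implicit Types x y z S R T U W X : clif K n.
Local Notation "x ** y" := (cmul eta x y) (at level 40, left associativity).
Local Notation c := (blade_coef eta).
Local Notation cone := (cone K n).
Local Notation eN := (bas K (setT : {set 'I_n})).
Local Notation comb := (@comb K n).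

Lemma cscale_comb k a b : cscale k (comb a b) = comb (k * a) (k * b).
Proof. by apply/ffunP=> C; rewrite !ffunE; ring. Qed.

Lemma cone_comb : cone = comb 1 0.
Proof. by rewrite -cscale_cone cscale1. Qed.

Lemma sgn_n_odd : odd n -> (-1) ^+ n = -1 :> K.
Proof. by move=> h; rewrite -signr_odd h expr1. Qed.

Lemma sgn_n_even : ~~ odd n -> (-1) ^+ n = 1 :> K.
Proof. by move=> h; rewrite -signr_odd (negbTE h) expr0. Qed.

Lemma comb_eq a b a' b' : comb a b = comb a' b' -> a = a' /\ b = b'.
Proof.
move=> h; split.
  by rewrite -(comb0 a b n0) h comb0.
by rewrite -(combT a b n0) h combT.
Qed.

Lemma cone_central : center eta cone.
Proof. by move=> y; rewrite cmul1l cmul1r. Qed.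

Lemma ah_parity (j : bool) x : ah j x -> parity false x \/ parity true x.
Proof. by case: j => h; [right|left]; apply/(parity_ah two). Qed.

Lemma case_triv x U s0 : cinverse eta x U -> x ** cscale s0 cone = alpha x ->
  s0 * s0 = 1 -> Pset eta x.
Proof.
move=> hU hx hs.
have hs' : s0 = 1 \/ s0 = -1.
  have e : (s0 - 1) * (s0 + 1) = s0 * s0 - 1 by ring.
  rewrite hs subrr in e; move/eqP: e.
  rewrite mulf_eq0 subr_eq0 addr_eq0 => /orP [/eqP->|/eqP->]; by [left|right].
exists cone, x; split.
- exact: cone_central.
- by exists cone; apply: inv_cone.
- by exists U.
- rewrite cmulZr cmul1r in hx.
  case: hs' => e; rewrite e in hx.
    by apply: (@ah_parity false); rewrite /ah -hx /= expr0.
  by apply: (@ah_parity true); rewrite /ah -hx /= expr1.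
- by rewrite cmul1l.
Qed.

Lemma case_even x U s0 sN : ~~ odd n -> sN != 0 -> cinverse eta x U ->
  x ** comb s0 sN = alpha x -> comb s0 sN ** alpha (comb s0 sN) = cone -> False.
Proof.
move=> hn hsN [hU1 hU2] hx hS.
rewrite alpha_comb sgn_n_even // mul1r comb_mul cone_comb in hS.
have [_ h2] := comb_eq hS.
have hs0 : s0 = 0.
  have : (s0 * sN) * 2 == 0 by apply/eqP; rewrite -h2; ring.
  by rewrite !mulf_eq0 (negbTE two) (negbTE hsN) orbF orbF => /eqP.
have hc : comb s0 sN = cscale sN eN by rewrite hs0; apply/ffunP=> C; rewrite !ffunE; ring.
rewrite hc cmulZr in hx.
have e1 : eN ** x = cscale (sN * c setT setT) x.
  by rewrite eN_even // -hx cmulZl cmulA eN_sq cmulZr cmul1r cscaleA.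
have e2 : eN = cscale (sN * c setT setT) cone.
  by rewrite -hU1 -cmulZl -e1 cmulA hU1 cmul1r.
have := congr1 (fun f : clif K n => f set0) e2; rewrite !ffunE eq_sym (negbTE (setT_neq0 n0)) eqxx.
move/eqP; rewrite eq_sym mulr1 mulf_eq0 (negbTE hsN) /=.
by rewrite (negbTE (coef_neq0 etaNZ _ _)).
Qed.

Lemma case_odd x U s0 sN : odd n -> sN != 0 -> cinverse eta x U ->
  x ** comb s0 sN = alpha x -> comb s0 sN ** alpha (comb s0 sN) = cone -> Pset eta x.
Proof.
move=> hn hsN hU hx hS.
rewrite alpha_comb sgn_n_odd // mulN1r comb_mul cone_comb in hS.
have [h1 _] := comb_eq hS.
set cc := c setT setT in h1.
have hc : cc = (s0 * s0 - 1) / (sN * sN).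
  by rewrite -h1; field.
have [eps [heps hd]] : exists eps : K, (eps = 1 \/ eps = -1) /\ 1 + eps * s0 != 0.
  case: (eqVneq s0 (-1)) => h.
    exists (-1); split; first by right.
    by rewrite h mulN1r opprK (_ : 1 + 1 = 2) //.
  exists 1; split; first by left.
  by rewrite mul1r addrC addr_eq0.
set d := 2 * (1 + eps * s0).
have dN : d != 0 by rewrite mulf_neq0.
set W := comb (1 + eps * s0) (- eps * sN).
set W' := comb ((1 + eps * s0) / d) (eps * sN / d).
have hWW : cinverse eta W W'.
{ split; rewrite /W /W' comb_mul cone_comb -/cc hc; congr comb; rewrite /d;
    case: heps hd => -> hd; field.
  all: by move: hd; rewrite ?mul1r => hd; rewrite ?hsN ?hd ?two. }
set T' := W' ** x.
have hxW : x = W ** T' by rewrite /T' -cmulA hWW.1 cmul1l.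
have hS' : alpha W' ** comb s0 sN = cscale eps W'.
{ rewrite /W' alpha_comb sgn_n_odd // comb_mul cscale_comb -/cc hc; congr comb; rewrite /d;
    case: heps hd => -> hd; field.
  all: by move: hd; rewrite ?mul1r => hd; rewrite ?hsN ?hd ?two. }
have hT' : alpha T' = cscale eps T'.
  by rewrite /T' alpha_mul -hx -(comb_central _ _ _ hn) -cmulA hS' cmulZl.
exists W, T'; split.
- exact: comb_central.
- by exists W'.
- by exists (U ** W); apply: inv_mul => //; apply: inv_sym.
- case: heps => e; rewrite e in hT'.
    by apply: (@ah_parity false); rewrite /ah hT' /= expr0.
  by apply: (@ah_parity true); rewrite /ah hT' /= expr1.
- exact: hxW.
Qed.


End Cases.



Section Main.
Variables (K : fieldType) (n : nat) (eta : 'I_n -> K).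
Hypothesis etaNZ : forall i, eta i != 0.
Hypothesis two : (2 : K) != 0.
Hypothesis n2 : (1 < n)%N.
Implicit Types A B C D : {set 'I_n}.
Implicit Types x y z S R T U W X : clif K n.
Local Notation "x ** y" := (cmul eta x y) (at level 40, left associativity).
Local Notation c := (blade_coef eta).
Local Notation cone := (cone K n).
Local Notation eN := (bas K (setT : {set 'I_n})).
Local Notation comb := (@comb K n).

Lemma n0 : (0 < n)%N. Proof. exact: ltnW. Qed.

Lemma hom_ah T : parity false T \/ parity true T -> exists k, ah k T.
Proof. by case=> h; [exists false|exists true]; apply/(parity_ah two). Qed.

Lemma P_Gamma (j : bool) x : Pset eta x -> Gamma eta j x.
Proof.
case=> W [T [hW [W' hWW] [T' hTT] hT ->]].
have hx : cinverse eta (W ** T) (T' ** W') := inv_mul hWW hTT.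
split; first by exists (T' ** W').
move=> U hU X hX.
have -> : U = T' ** W' := inv_uniq hU hx.
have e1 : W ** T ** X ** (T' ** W') = W ** (T ** X ** T') ** W' by rewrite !cmulA.
rewrite e1 hW cmulA hWW.1 cmul1r.
have [k hk] := hom_ah hT.
have hk' := ah_inv hTT hk.
have := ah_mul eta (ah_mul eta hk (proj1 (parity_ah two j X) hX)) hk'.
rewrite addbC addbA addbb addFb => h.
exact/(parity_ah two).
Qed.

Lemma Gamma_P (j : bool) x : Gamma eta j x -> Pset eta x.
Proof.
case=> [[U hU] H].
pose S := U ** alpha x.
have comm : forall X, ah j X -> S ** X = X ** S.
  move=> X hX.
  have hY : ah j (x ** X ** U).
    by apply/(parity_ah two); apply: H => //; apply/(parity_ah two).
  have e : alpha x ** X ** alpha U = x ** X ** U.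
    move: hY; rewrite /ah !alpha_mul hX cmulZr cmulZl => h.
    have := congr1 (cscale ((-1) ^+ j)) h.
    by rewrite !cscaleA sgn_sq !cscale1.
  have hUT : alpha U ** alpha x = cone by rewrite -alpha_mul hU.2 alpha_cone.
  have e2 : U ** alpha x ** X = U ** (alpha x ** X ** alpha U) ** alpha x.
    by rewrite -[LHS](cmul1r eta) -hUT !cmulA.
  rewrite /S e2 e !cmulA -(cmulA _ U x) hU.2 cmul1l.
  done.
have [R hR] : exists R, forall k, cgen K k ** S = R ** cgen K k.
  case: j H comm => H comm.
    by exists S => k; symmetry; apply: comm; apply: cgen_ah.
  pose k0 := Ordinal n0.
  exists (cscale (eta k0)^-1 (cgen K k0 ** S ** cgen K k0)) => i.
  rewrite cmulZl cmulA cmulA comm; last by apply: (@ah_mul _ _ eta true true); apply: cgen_ah.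
  by rewrite -!cmulA cgen_sq !cmulZl cmul1l cscaleA mulVf // cscale1.
have hS : S = comb (S set0) (S setT) := decomp n0 (gen_comm etaNZ two hR).
have hTS : x ** S = alpha x by rewrite /S -cmulA hU.1 cmul1l.
have hSS : S ** alpha S = cone.
  rewrite /S alpha_mul alphaK !cmulA -(cmulA _ (alpha x)) -alpha_mul hU.1 alpha_cone.
  by rewrite cmul1l hU.2.
case: (eqVneq (S setT) 0) => hN.
  rewrite hS hN -cscale_cone in hTS hSS.
  apply: (@case_triv _ _ eta two _ _ _ hU hTS).
  rewrite alpha_scale alpha_cone cmulZl cmulZr cmul1l cscaleA in hSS.
  have := congr1 (fun f : clif K n => f set0) hSS; rewrite !ffunE eqxx !mulr1.
  done.
case: (boolP (odd n)) => hn.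
  by rewrite hS in hTS hSS; apply: (@case_odd _ _ eta two n0 _ _ _ _ hn hN hU hTS hSS).
by rewrite hS in hTS hSS; case: (@case_even _ _ eta etaNZ two n0 _ _ _ _ hn hN hU hTS hSS).
Qed.

End Main.



Section Final.
Variables (K : fieldType) (n : nat) (eta : 'I_n -> K).
Hypothesis etaNZ : forall i, eta i != 0.
Hypothesis two : (2 : K) != 0.
Hypothesis n2 : (1 < n)%N.
Implicit Types A B C D : {set 'I_n}.
Implicit Types x y z S R T U W X : clif K n.
Local Notation "x ** y" := (cmul eta x y) (at level 40, left associativity).
Local Notation c := (blade_coef eta).
Local Notation cone := (cone K n).
Local Notation eN := (bas K (setT : {set 'I_n})).
Local Notation comb := (@comb K n).

Let n0 : (0 < n)%N := ltnW n2.

Lemma parity_scale (j : bool) k x : parity j x -> parity j (cscale k x).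
Proof. by move=> h A hA; rewrite ffunE h // mulr0. Qed.

Lemma even_char : ~~ odd n -> forall x, Pset eta x <->
  ((cunit eta x /\ parity false x) \/ (cunit eta x /\ parity true x)).
Proof.
move=> hn x; split.
  case=> W [T [hW [W' hWW] [T' hTT] hT ->]].
  have hR : forall k, cgen K k ** W = W ** cgen K k by move=> k; rewrite hW.
  have hWd : W = comb (W set0) (W setT) := decomp n0 (gen_comm etaNZ two hR).
  rewrite (gen_top etaNZ two n0 hR hn) -cscale_cone in hWd.
  have hu : cunit eta (W ** T) by exists (T' ** W'); apply: inv_mul.
  rewrite {2 4}hWd cmulZl cmul1l.
  by case: hT => h; [left|right]; split => //; apply: parity_scale.
case=> [[hu hp]|[hu hp]]; exists cone, x; (split; [exact: cone_central|
  by exists cone; apply: inv_cone| exact: hu| |by rewrite cmul1l]); by [left|right].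
Qed.

Lemma odd_char : odd n -> forall x, Pset eta x <->
  exists W T, [/\ center eta W, cunit eta W, cunit eta T, parity false T & x = W ** T].
Proof.
move=> hn x; split; last first.
  by case=> W [T [hW hWu hTu hT ->]]; exists W, T; split => //; left.
case=> W [T [hW [W' hWW] [T' hTT] hT ->]].
case: hT => hT; first by exists W, T; split => //; [exists W'|exists T'].
set e' := cscale (c setT setT)^-1 eN.
have cN : c setT setT != 0 by apply: coef_neq0.
have he : cinverse eta eN e'.
  by split; rewrite /e' ?cmulZl ?cmulZr eN_sq cscaleA mulVf // cscale1.
have e'c : center eta e'.
  by move=> y; rewrite /e' cmulZl cmulZr eN_central.
exists (W ** e'), (eN ** T); split.
- by move=> y; rewrite cmulA e'c -cmulA hW cmulA.
- by exists (eN ** W'); apply: inv_mul => //; apply: inv_sym.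
- by exists (T' ** e'); apply: inv_mul.
- apply/(parity_ah two).
  have := ah_mul eta (i := true) (j := true) (x := eN) (y := T).
  apply => //; last by apply/(parity_ah two).
  by rewrite /ah alpha_eN sgn_n_odd.
- by rewrite cmulA -(cmulA _ e') he.2 cmul1l.
Qed.

Lemma concl : theorem4_concl eta.
Proof.
split; [|split; [|split]].
- by move=> x; split; [apply: P_Gamma | apply: Gamma_P].
- by move=> x; split; [apply: P_Gamma | apply: Gamma_P].
- exact: even_char.
- exact: odd_char.
Qed.

End Final.

Lemma two_neq0 (F : numFieldType) : (2 : F) != 0.
Proof. by rewrite pnatr_eq0. Qed.

Theorem mainTheorem4 (R : realType) (n : nat) (hn : (2 <= n)%N) :
  (forall (p q : nat) (e : p + q = n),
      theorem4_concl (sig_eta R n p)) /\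
  theorem4_concl (fun _ : 'I_n => (1 : R[i])).
Proof.
split.
  move=> p q e; apply: concl => //; last exact: two_neq0.
  by move=> i; rewrite /sig_eta; case: ifP => _; rewrite ?oppr_eq0 oner_eq0.
apply: concl => //; last exact: two_neq0.
by move=> i; rewrite oner_eq0.
Qed.
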